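(* Let $(D_-,D_+,H)$ be a periodic upwind DP SBP triple, $D=\tfrac12(D_++D_-)$, $g>0$, and $\gamma_1,\gamma_2\ge0$. Let $\mathbf h,\mathbf m:[0,T]\to\mathbb{R}^N$ be differentiable with $h_j(t)>0$ for all $j,t$, and set $\mathbf u=\mathbf m/\mathbf h$ (entrywise). Suppose $\mathbf U=(\mathbf h;\mathbf m)$ satisfies the semi-discrete shallow water scheme $$\partial_t\mathbf h+D(\mathbf h\circ\mathbf u)=\tfrac{\gamma_1}{2}(D_+-D_-)\mathbf g_1,\qquad \partial_t\mathbf m+\tfrac12 D(\mathbf h\circ\mathbf u\circ\mathbf u)+\tfrac12\mathbf u\circ D(\mathbf h\circ\mathbf u)+\tfrac12(\mathbf h\circ\mathbf u)\circ D\mathbf u+g\,\mathbf h\circ D\mathbf h=\tfrac{\gamma_2}{2}(D_+-D_-)\mathbf g_2,$$ where $\mathbf g_1=g\mathbf h-\tfrac12\mathbf u\circ\mathbf u$, $\mathbf g_2=\mathbf u$. Let $E_h(t)=\sum_{j=1}^N h_j^{H}\big(\tfrac12 h_j u_j^2+\tfrac12 g h_j^2\big)$ where $h^H_j$ are the diagonal entries of $H$. Then (1) $\frac{d}{dt}E_h=\tfrac12\sum_{i=1}^2\gamma_i\langle\mathbf g_i,(D_+-D_-)\mathbf g_i\rangle_H\le0$, with $E_h$ constant if $\gamma_1=\gamma_2=0$; (2) $\frac{d}{dt}\langle\mathbf 1,\mathbf h\rangle_H=0$ and $\frac{d}{dt}\langle\mathbf 1,\mathbf m\rangle_H=0$ (total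 mass and total momentum are conserved).
   Context: Fix $N\ge2$, $H=\mathrm{diag}(h^H_1,\dots,h^H_N)$ with $h^H_j>0$, $\langle \mathbf f,\mathbf g\rangle_H=\mathbf f^TH\mathbf g$, $\mathbf 1=(1,\dots,1)^T\in\mathbb{R}^N$; $\circ$ is the entrywise product. A triple $(D_-,D_+,H)$ with $D_\pm\in\mathbb{R}^{N\times N}$ is a periodic upwind DP SBP triple if (i) $\langle D_+\mathbf f,\mathbf g\rangle_H+\langle \mathbf f,D_-\mathbf g\rangle_H=0$ for all $\mathbf f,\mathbf g\in\mathbb{R}^N$; (ii) $\langle \mathbf f,(D_+-D_-)\mathbf f\rangle_H\le0$ for all $\mathbf f\in\mathbb{R}^N$; (iii) $D_+\mathbf 1=D_-\mathbf 1=\mathbf 0$. Here $\mathbf h$ is the water height, $\mathbf m=\mathbf h\circ\mathbf u$ the momentum, $g$ the gravitational constant. *)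

(* Defs.v *)
From HB Require Import structures.
From mathcomp Require Import all_boot all_order all_algebra.
From mathcomp Require Import all_classical all_reals.
From mathcomp Require Import topology normedtype derive.
Set Implicit Arguments. Unset Strict Implicit. Unset Printing Implicit Defensive.
Import Order.TTheory GRing.Theory Num.Theory numFieldNormedType.Exports.
Local Open Scope ring_scope.

Section Defs.
Context {R : realType} {N : nat}.

Definition hprod (u v : 'cV[R]_N) : 'cV[R]_N := \col_i (u i 0 * v i 0).
Definition hdiv (u v : 'cV[R]_N) : 'cV[R]_N := \col_i (u i 0 / v i 0).

Definition ipH (hH : 'rV[R]_N) (f g : 'cV[R]_N) : R :=
  (f^T *m diag_mx hH *m g) 0 0.

Definition ones : 'cV[R]_N := const_mx 1.

Definition upwind_SBP (Dm Dp : 'M[R]_N) (hH : 'rV[R]_N) : Prop :=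
  [/\ forall f g : 'cV[R]_N, ipH hH (Dp *m f) g + ipH hH f (Dm *m g) = 0,
      forall f : 'cV[R]_N, ipH hH f ((Dp - Dm) *m f) <= 0,
      Dp *m ones = 0 & Dm *m ones = 0].

Definition dvec (v : R -> 'cV[R]_N) (t : R) : 'cV[R]_N :=
  \col_j (derive1 (fun s => v s j 0) t).

End Defs.

(* Main.v *)
Require Import Defs.
From HB Require Import structures.
From mathcomp Require Import all_boot all_order all_algebra.
From mathcomp Require Import all_classical all_reals.
From mathcomp Require Import topology normedtype derive.
From mathcomp Require Import ring lra.
Import Order.TTheory GRing.Theory Num.Theory numFieldNormedType.Exports.
Local Open Scope ring_scope.

Section IP.
Context {R : realType} {N : nat} (hH : 'rV[R]_N).
Implicit Types f k : 'cV[R]_N.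

Lemma ipHE f k : ipH hH f k = \sum_j f j 0 * hH 0 j * k j 0.
Proof.
rewrite /ipH mul_mx_diag mxE; apply: eq_bigr => j _; by rewrite !mxE.
Qed.

Lemma ipHC f k : ipH hH f k = ipH hH k f.
Proof. rewrite !ipHE; apply: eq_bigr => j _; ring. Qed.

Lemma ipHDr f k l : ipH hH f (k + l) = ipH hH f k + ipH hH f l.
Proof. rewrite !ipHE -big_split; apply: eq_bigr => j _; by rewrite !mxE mulrDr. Qed.

Lemma ipHBr f k l : ipH hH f (k - l) = ipH hH f k - ipH hH f l.
Proof. rewrite !ipHE -sumrB; apply: eq_bigr => j _; rewrite !mxE; ring. Qed.

Lemma ipHZr f k (a : R) : ipH hH f (a *: k) = a * ipH hH f k.
Proof. rewrite !ipHE mulr_sumr; apply: eq_bigr => j _; rewrite !mxE; ring. Qed.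

Lemma ipHDl f k l : ipH hH (k + l) f = ipH hH k f + ipH hH l f.
Proof. by rewrite ipHC ipHDr !(ipHC f). Qed.

Lemma ipHBl f k l : ipH hH (k - l) f = ipH hH k f - ipH hH l f.
Proof. by rewrite ipHC ipHBr !(ipHC f). Qed.

Lemma ipHZl f k (a : R) : ipH hH (a *: k) f = a * ipH hH k f.
Proof. by rewrite ipHC ipHZr ipHC. Qed.

Lemma ipH0l f : ipH hH 0 f = 0.
Proof. rewrite ipHE big1 // => j _; rewrite mxE; ring. Qed.

Lemma ipH_hprod a b c : ipH hH a (hprod b c) = ipH hH (hprod a b) c.
Proof. rewrite !ipHE; apply: eq_bigr => j _; rewrite !mxE; ring. Qed.

Lemma ipH_ones a b : ipH hH ones (hprod a b) = ipH hH a b.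
Proof. rewrite !ipHE; apply: eq_bigr => j _; rewrite !mxE; ring. Qed.

End IP.

Lemma hprodC {R : realType} {N : nat} (a b : 'cV[R]_N) : hprod a b = hprod b a.
Proof. apply/matrixP => i j; rewrite !mxE; ring. Qed.

Lemma hprodA {R : realType} {N : nat} (a b c : 'cV[R]_N) :
  hprod a (hprod b c) = hprod (hprod a b) c.
Proof. apply/matrixP => i j; rewrite !mxE; ring. Qed.
Lemma scR {R : realType} (a b : R) : a *: b = a * b. Proof. by []. Qed.
Lemma fmulE {R : realType} (f g : R -> R) x : (f * g) x = f x * g x. Proof. by []. Qed.
Lemma fexp2E {R : realType} (f : R -> R) x : (f ^+ 2) x = f x ^+ 2. Proof. by rewrite /= expr2. Qed.

Lemma term_deriv {R : realType} (f k : R -> R) (t df dk c g : R) :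
  is_derive t 1 f df -> is_derive t 1 k dk -> f t != 0 ->
  is_derive t 1 (fun s => c * (2^-1 * f s * (k s / f s) ^+ 2 + 2^-1 * g * f s ^+ 2))
    (c * ((k t / f t) * dk + (g * f t - 2^-1 * (k t / f t) ^+ 2) * df)).
Proof.
move=> Hf Hk f0.
have Hdf : derivable f t 1 by apply: ex_derive.
have Hi : is_derive t 1 (fun s => (f s)^-1) (- f t ^- 2 *: df).
  have := derivableP (derivableV f0 Hdf).
  by rewrite deriveV // derive_val.
set fi := (fun s => (f s)^-1) in Hi.
have -> : (fun s => c * (2^-1 * f s * (k s / f s) ^+ 2 + 2^-1 * g * f s ^+ 2))
   = cst c * (cst (2^-1) * f * (k * fi) ^+ 2 + cst (2^-1 * g) * f ^+ 2).
  by apply/funext => s.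
apply: is_derive_eq.
rewrite !scaler0 !addr0 !scR !fexp2E /fi !fmulE /cst /=.
field.
exact: f0.
Qed.

Lemma lin_deriv {R : realType} {N : nat} (hH : 'rV[R]_N) (c : 'cV[R]_N)
   (v : R -> 'cV[R]_N) t :
  (forall j, derivable (fun s => v s j 0) t 1) ->
  is_derive t 1 (fun s => ipH hH c (v s)) (ipH hH c (dvec v t)).
Proof.
move=> Hd.
have -> : (fun s => ipH hH c (v s)) =
   \sum_(j < N) (fun s => c j 0 * hH 0 j * v s j 0).
  by apply/funext => s; rewrite fct_sumE ipHE.
rewrite ipHE; apply: is_derive_sum => j.
have H1 := derivableP (Hd j).
have -> : (fun s => c j 0 * hH 0 j * v s j 0) =
   cst (c j 0 * hH 0 j) * (fun s => v s j 0) by apply/funext.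
apply: is_derive_eq.
by rewrite scaler0 addr0 scR mxE derive1E /cst.
Qed.

Lemma D_skew {R : realType} {N : nat} (Dm Dp : 'M[R]_N) (hH : 'rV[R]_N) :
  upwind_SBP Dm Dp hH -> forall f k,
  ipH hH ((2^-1 *: (Dp + Dm)) *m f) k = - ipH hH f ((2^-1 *: (Dp + Dm)) *m k).
Proof.
case=> H1 _ _ _ f k.
rewrite -!scalemxAl !mulmxDl ipHZl ipHZr ipHDl ipHDr.
have := H1 f k; have := H1 k f.
rewrite (ipHC _ k (Dm *m f)) (ipHC _ (Dp *m k) f).
lra.
Qed.

Lemma ones_D {R : realType} {N : nat} (Dm Dp : 'M[R]_N) (hH : 'rV[R]_N) :
  upwind_SBP Dm Dp hH -> forall f,
  ipH hH ones ((2^-1 *: (Dp + Dm)) *m f) = 0 /\ ipH hH ones ((Dp - Dm) *m f) = 0.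
Proof.
move=> Hs f; have [H1 _ Hp Hm] := Hs.
split.
  by rewrite -(opprK (ipH _ _ _)) -D_skew // -scalemxAl mulmxDl Hp Hm addr0 scaler0 ipH0l oppr0.
rewrite mulmxBl ipHBr.
have := H1 f ones; have := H1 ones f.
rewrite Hp Hm !ipH0l (ipHC _ ones (Dp *m f)) (ipHC _ f 0) ipH0l; lra.
Qed.
Lemma cst_on {R : realType} (f : R -> R) (T : R) :
  (forall t, t \in `[0, T] -> is_derive t 1 f 0) ->
  forall a b, a \in `[0, T] -> b \in `[0, T] -> f a = f b.
Proof.
move=> Hz.
have key : forall a b, a \in `[0, T] -> b \in `[0, T] -> a < b -> f a = f b.
  move=> a b Ha Hb ab.
  have sub : forall x, x \in `[a, b] -> x \in `[0, T].
    move: Ha Hb; rewrite !in_itv /= => /andP[a1 a2] /andP[b1 b2] x /andP[x1 x2].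
    apply/andP; split; [exact: le_trans x1 | exact: le_trans b2].
  have Hc : {within `[a, b], continuous f}%classic.
    apply: derivable_within_continuous => x Hx.
    have Hx2 := Hz x (sub x Hx). apply: ex_derive.
  have Hd : forall x, x \in `]a, b[ -> is_derive x 1 f ((fun=> 0) x).
    move=> x Hx; apply: Hz; apply: sub.
    move: Hx; rewrite !in_itv /= => /andP[x1 x2]; apply/andP; split; exact: ltW.
  have [c _] := MVT ab Hd Hc.
  rewrite mul0r => /eqP; rewrite subr_eq0 => /eqP -> //.
move=> t1 t2 H1 H2; case: (ltgtP t1 t2) => [lt|gt|->] //.
  exact: key.
by symmetry; apply: key.
Qed.

Theorem mainTheorem10 (R : realType) (N : nat) (Dm Dp : 'M[R]_N)
  (hH : 'rV[R]_N) (g gamma1 gamma2 T : R)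
  (h m : R -> 'cV[R]_N) :
  (2 <= N)%N ->
  (forall j, 0 < hH 0 j) ->
  upwind_SBP Dm Dp hH ->
  0 < g -> 0 <= gamma1 -> 0 <= gamma2 ->
  (forall t, t \in `[0, T] -> forall j,
     derivable (fun s => h s j 0) t 1 /\ derivable (fun s => m s j 0) t 1) ->
  (forall t, t \in `[0, T] -> forall j, 0 < h t j 0) ->
  let D := 2^-1 *: (Dp + Dm) in
  let u := fun t => hdiv (m t) (h t) in
  let g1 := fun t => g *: h t - 2^-1 *: hprod (u t) (u t) in
  let g2 := u in
  (forall t, t \in `[0, T] ->
     dvec h t + D *m hprod (h t) (u t)
     = (gamma1 / 2) *: ((Dp - Dm) *m g1 t)) ->
  (forall t, t \in `[0, T] ->
     dvec m t
     + 2^-1 *: (D *m hprod (h t) (hprod (u t) (u t)))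
     + 2^-1 *: hprod (u t) (D *m hprod (h t) (u t))
     + 2^-1 *: hprod (hprod (h t) (u t)) (D *m u t)
     + g *: hprod (h t) (D *m h t)
     = (gamma2 / 2) *: ((Dp - Dm) *m g2 t)) ->
  let E := fun t => \sum_j hH 0 j *
             (2^-1 * h t j 0 * (u t j 0) ^+ 2 + 2^-1 * g * (h t j 0) ^+ 2) in
  (forall t, t \in `[0, T] ->
     let dE := 2^-1 * (gamma1 * ipH hH (g1 t) ((Dp - Dm) *m g1 t)
                       + gamma2 * ipH hH (g2 t) ((Dp - Dm) *m g2 t)) in
     is_derive t 1 E dE /\ dE <= 0) /\
  (gamma1 = 0 -> gamma2 = 0 ->
     forall t1 t2, t1 \in `[0, T] -> t2 \in `[0, T] -> E t1 = E t2) /\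
  (forall t, t \in `[0, T] ->
     is_derive t 1 (fun s => ipH hH ones (h s)) 0 /\
     is_derive t 1 (fun s => ipH hH ones (m s)) 0).
Proof.
move=> _ _ Hsbp g0 ga1 ga2 Hder Hpos D u g1 g2 eq1 eq2 E.
have Sk : forall f k, ipH hH (D *m f) k = - ipH hH f (D *m k) by move=> f k; exact: (@D_skew _ _ Dm Dp hH Hsbp).
have Ederiv : forall t, t \in `[0, T] ->
   is_derive t 1 E (ipH hH (u t) (dvec m t) + ipH hH (g1 t) (dvec h t)).
  move=> t Ht.
  have -> : E = \sum_(j < N) (fun s => hH 0 j *
       (2^-1 * h s j 0 * (m s j 0 / h s j 0) ^+ 2 + 2^-1 * g * h s j 0 ^+ 2)).
    apply/funext => s; rewrite fct_sumE /E; apply: eq_bigr => j _.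
    by rewrite /u mxE.
  have -> : ipH hH (u t) (dvec m t) + ipH hH (g1 t) (dvec h t) =
     \sum_(j < N) (hH 0 j * ((m t j 0 / h t j 0) * 'D_1 (fun s => m s j 0) t
        + (g * h t j 0 - 2^-1 * (m t j 0 / h t j 0) ^+ 2) * 'D_1 (fun s => h s j 0) t)).
    rewrite !ipHE -big_split /=; apply: eq_bigr => j _.
    rewrite /g1 /u !mxE !derive1E; ring.
  apply: is_derive_sum => j.
  have [Hh Hm] := Hder t Ht j.
  apply: term_deriv; try exact: derivableP.
  by rewrite gt_eqF // Hpos.
have dEval : forall t, t \in `[0, T] ->
   ipH hH (u t) (dvec m t) + ipH hH (g1 t) (dvec h t) =
   2^-1 * (gamma1 * ipH hH (g1 t) ((Dp - Dm) *m g1 t)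
                       + gamma2 * ipH hH (g2 t) ((Dp - Dm) *m g2 t)).
  move=> t Ht.
  have E1 := congr1 (ipH hH (g1 t)) (eq1 t Ht).
  have E2 := congr1 (ipH hH (u t)) (eq2 t Ht).
  rewrite ipHDr ipHZr in E1.
  rewrite !ipHDr !ipHZr in E2.
  have P56 : ipH hH (g1 t) (D *m hprod (h t) (u t)) =
     g * ipH hH (h t) (D *m hprod (h t) (u t))
     - 2^-1 * ipH hH (hprod (u t) (u t)) (D *m hprod (h t) (u t)).
    by rewrite /g1 ipHBl !ipHZl.
  have F2 : ipH hH (u t) (hprod (u t) (D *m hprod (h t) (u t))) =
            ipH hH (hprod (u t) (u t)) (D *m hprod (h t) (u t)) by rewrite ipH_hprod.
  have F13 : ipH hH (u t) (D *m hprod (h t) (hprod (u t) (u t)))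
      + ipH hH (u t) (hprod (hprod (h t) (u t)) (D *m u t)) = 0.
    rewrite ipH_hprod -(opprK (ipH hH (u t) (D *m _))) -Sk ipHC.
    have -> : hprod (u t) (hprod (h t) (u t)) = hprod (h t) (hprod (u t) (u t)).
      by apply/matrixP => i j; rewrite !mxE; ring.
    by rewrite addNr.
  have F45 : ipH hH (u t) (hprod (h t) (D *m h t))
      + ipH hH (h t) (D *m hprod (h t) (u t)) = 0.
    rewrite ipH_hprod -(opprK (ipH hH (h t) _)) -Sk ipHC (hprodC (u t)).
    by rewrite subrr.
  move: E1 E2 P56 F2 F13 F45; rewrite /g2.
  move=> E1 E2 P56 F2 F13 F45.
  have F45' : g * ipH hH (u t) (hprod (h t) (D *m h t)) = - (g * ipH hH (h t) (D *m hprod (h t) (u t))).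
    by rewrite -mulrN; congr (_ * _); apply/eqP; rewrite -addr_eq0 F45.
  rewrite F45' in E2; rewrite P56 in E1.
  lra.
split.
  move=> t Ht dE; split.
    rewrite /dE -dEval //; exact: Ederiv.
  rewrite /dE; have [_ H2 _ _] := Hsbp.
  have p1 := mulr_ge0_le0 ga1 (H2 (g1 t)); have p2 := mulr_ge0_le0 ga2 (H2 (g2 t)).
  apply: mulr_ge0_le0; first by rewrite invr_ge0 ler0n.
  lra.
split.
  move=> G1 G2.
  apply: (@cst_on _ E T).
  move=> t Ht; apply: is_derive_eq (Ederiv t Ht) _.
  by rewrite dEval // G1 G2 !mul0r addr0 mulr0.
move=> t Ht; split.
  apply: is_derive_eq (lin_deriv hH ones h t (fun j => (Hder t Ht j).1)) _.
  have E1 := congr1 (ipH hH ones) (eq1 t Ht); rewrite ipHDr ipHZr in E1.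
  have [Ha _] := @ones_D _ _ Dm Dp hH Hsbp (hprod (h t) (u t)); have [_ Hc] := @ones_D _ _ Dm Dp hH Hsbp (g1 t).
  rewrite Ha Hc in E1; lra.
apply: is_derive_eq (lin_deriv hH ones m t (fun j => (Hder t Ht j).2)) _.
have E2 := congr1 (ipH hH ones) (eq2 t Ht); rewrite !ipHDr !ipHZr !ipH_ones in E2.
have [Ha _] := @ones_D _ _ Dm Dp hH Hsbp (hprod (h t) (hprod (u t) (u t))); have [_ Hc] := @ones_D _ _ Dm Dp hH Hsbp (g2 t).
have S1 : ipH hH (u t) (D *m hprod (h t) (u t)) + ipH hH (hprod (h t) (u t)) (D *m u t) = 0.
  by rewrite -(opprK (ipH hH (u t) _)) -Sk ipHC addNr.
have S2 : ipH hH (h t) (D *m h t) = 0.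
  have := Sk (h t) (h t); rewrite ipHC; lra.
rewrite Ha Hc S2 in E2; lra.
Qed.
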